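(* For every $\varepsilon\in(0,\tfrac12)$ there is an $n_0=n_0(\varepsilon)$ such that the following holds for all $n>n_0$. Let $G=(A,B;E_G)$ and $H=(S,T;E_H)$ be bipartite graphs with $|A|=|B|=|S|=|T|=n$ satisfying: (1) $d_G(x)>\left(\tfrac12+\varepsilon\right)n$ for all $x\in A\cup B$; (2) $d_H(x)<\dfrac{\varepsilon^4}{100}\cdot\dfrac{n}{\log n}$ for all $x\in S$; (3) $d_H(y)=1$ for all $y\in T$. Then $H\subseteq G$, i.e. $G$ contains a subgraph isomorphic to $H$ via an isomorphism mapping $S$ onto $A$ and $T$ onto $B$.
   Context: All graphs are simple. $d_G(v)$ denotes the degree of vertex $v$ in graph $G$. For a bipartite graph written $G=(A,B;E)$, $A$ and $B$ are its two vertex classes. *)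

(* Defs.v *)
From mathcomp Require Import all_boot.
From Stdlib Require Import Reals.
Set Implicit Arguments. Unset Strict Implicit. Unset Printing Implicit Defensive.

(* A bipartite graph (X, Y; E) with |X| = |Y| = n is encoded by its
   biadjacency relation E : 'I_n -> 'I_n -> bool (x in X adjacent to y in Y). *)
Definition bigraph (n : nat) := 'I_n -> 'I_n -> bool.

Definition degL n (E : bigraph n) (x : 'I_n) : nat := #|[set y | E x y]|.
Definition degR n (E : bigraph n) (y : 'I_n) : nat := #|[set x | E x y]|.

Definition bip_embeds n (H G : bigraph n) : Prop :=
  exists (phi psi : 'I_n -> 'I_n),
    bijective phi /\ bijective psi /\
    forall s t, H s t -> G (phi s) (psi t).

(* Main.v *)
Require Import Defs.
From HB Require Import structures.
From mathcomp Require Import all_boot zify.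
From Stdlib Require Import Reals Lra Lia Psatz Classical.
Open Scope R_scope.

Set Implicit Arguments. Unset Strict Implicit.

HB.instance Definition _ := Monoid.isComLaw.Build R R0 Rplus (fun x y z => esym (Rplus_assoc x y z)) Rplus_comm Rplus_0_l.


Lemma rsum_le (I : finType) (A : {pred I}) (F G : I -> R) :
  (forall i, i \in A -> F i <= G i) -> \big[Rplus/0]_(i in A) F i <= \big[Rplus/0]_(i in A) G i.
Proof.
move=> H; apply: (big_ind2 (fun x y => x <= y)); first lra.
  by move=> *; lra.
by move=> i Ai; apply: H.
Qed.

Lemma rsum_ge0 (I : finType) (A : {pred I}) (F : I -> R) :
  (forall i, i \in A -> 0 <= F i) -> 0 <= \big[Rplus/0]_(i in A) F i.
Proof.
move=> H; apply: (big_ind (fun x => 0 <= x)); first lra.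
  by move=> *; lra.
by move=> i Ai; apply: H.
Qed.

Lemma rsum_scale (I : finType) (A : {pred I}) (F : I -> R) c :
  \big[Rplus/0]_(i in A) (c * F i) = c * \big[Rplus/0]_(i in A) F i.
Proof.
rewrite (big_endo (fun x => c * x)) //.
  by move=> x y; rewrite Rmult_plus_distr_l.
by rewrite Rmult_0_r.
Qed.

Lemma rsum_split (I : finType) (A : {pred I}) (F G : I -> R) :
  \big[Rplus/0]_(i in A) (F i + G i) = \big[Rplus/0]_(i in A) F i + \big[Rplus/0]_(i in A) G i.
Proof. by rewrite big_split. Qed.

Lemma rsum_opp (I : finType) (A : {pred I}) (F : I -> R) :
  \big[Rplus/0]_(i in A) (- F i) = - \big[Rplus/0]_(i in A) F i.
Proof.
rewrite (big_endo (fun x => - x)) //.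
  by move=> x y; rewrite Ropp_plus_distr.
by rewrite Ropp_0.
Qed.

Lemma INR_sum (I : finType) (A : {pred I}) (F : I -> nat) :
  INR (\sum_(i in A) F i)%N = \big[Rplus/0]_(i in A) INR (F i).
Proof.
rewrite (big_morph INR (id2 := O) (op2 := addn) (id1 := R0) (op1 := Rplus)) //.
by move=> x y; rewrite plus_INR.
Qed.

Lemma rsum_const (I : finType) (A : {pred I}) c :
  \big[Rplus/0]_(i in A) c = INR #|A| * c.
Proof.
have -> : \big[Rplus/0]_(i in A) c = \big[Rplus/0]_(i in A) (c * INR 1) by apply: eq_bigr => i _; rewrite /= Rmult_1_r.
rewrite rsum_scale -INR_sum sum1_card; ring.
Qed.

Lemma rsum_term (I : finType) (A : {pred I}) (F : I -> R) j :
  j \in A -> (forall i, i \in A -> 0 <= F i) -> F j <= \big[Rplus/0]_(i in A) F i.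
Proof.
move=> Aj H; rewrite (bigD1 j) //=.
set s := (X in _ + X).
have : 0 <= s.
  apply: (big_ind (fun x => 0 <= x)); first lra; first by move=> *; lra.
  by move=> i /andP[Ai _]; apply: H.
lra.
Qed.

Unset Implicit Arguments.

Lemma exp_key u : -1/4 <= u <= 1/4 -> exp (u - u^2) <= 1 + u.
Proof.
move=> hu.
case: (Rle_lt_dec 0 u) => h0.
- set x := u - u^2.
  have h1 := exp_ineq1_le (- x).
  have hx : 1 - x > 0 by rewrite /x; nra.
  have he : exp x * exp (- x) = 1 by rewrite -exp_plus Rplus_opp_r exp_0.
  have hpos : 0 < exp x := exp_pos x.
  have : exp x * (1 - x) <= 1 by nra.
  rewrite /x => h2.
  have h3 : (1 + u) * (1 - (u - u^2)) >= 1 by nra.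
  nra.
- set v := - u.
  have hv : 0 < v <= 1/4 by rewrite /v; lra.
  have h1 := exp_ineq1_le ((v + v^2)/2).
  have he : exp (v + v^2) = exp ((v + v^2)/2) * exp ((v + v^2)/2) by rewrite -exp_plus; f_equal; field.
  have he2 : exp (u - u^2) * exp (v + v^2) = 1.
    rewrite -exp_plus -exp_0; f_equal; rewrite /v; ring.
  have hp1 : 0 < exp ((v + v^2)/2) := exp_pos _.
  have hsq : (1 + (v + v^2)/2) * (1 + (v + v^2)/2) <= exp (v + v^2).
    rewrite he; apply: Rmult_le_compat; nra.
  have hpoly : (1 - v) * ((1 + (v + v^2)/2) * (1 + (v + v^2)/2)) >= 1.
    have : v^2 * (1/4 - 3/4 * v - 1/4 * v^2 - 1/4 * v^3) >= 0.
      apply: Rle_ge; apply: Rmult_le_pos; nra.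
    nra.
  have hpos : 0 < exp (u - u^2) := exp_pos _.
  have : (1 - v) * exp (v + v^2) >= 1 by nra.
  rewrite /v in he2 *; nra.
Qed.

Lemma delta_bound d0 u y r e : 0 <= d0 -> 0 <= u <= r*d0 -> 0 <= y <= r -> 0 <= r ->
  (e = 0 \/ e = 1) ->
  -d0 <= e*d0 + u*y/r - (d0+u)*(y+e)/(r+1) <= d0.
Proof.
move=> hd hu hy hr he.
case: (Req_dec r 0) => hr0.
  have hu0 : u = 0 by nra.
  have hy0 : y = 0 by nra.
  subst; rewrite /Rdiv; case: he => ->; split; ring_simplify; lra.
have hrp : 0 < r by lra.
set k := u / r.
have hk : u = k * r by rewrite /k; field.
have hk2 : 0 <= k <= d0 by split; nra.
have -> : e*d0 + u*y/r - (d0+u)*(y+e)/(r+1) = (d0 - k) * (e*r - y) / (r+1).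
  rewrite hk; field; lra.
have hr1 : 0 < r + 1 by lra.
have hb : - (d0 * r) <= (d0 - k) * (e * r - y) <= d0 * r.
  case: he => ->; split; nra.
set Z := (d0 - k) * (e * r - y) / (r + 1).
have hZ : (d0 - k) * (e * r - y) = Z * (r + 1) by rewrite /Z; field; lra.
rewrite hZ in hb; split; nra.
Qed.

Lemma exists_le_avg (T : finType) (A : {set T}) (F : T -> R) c :
  A != set0 -> \big[Rplus/0]_(a in A) F a = INR #|A| * c -> exists2 a, a \in A & F a <= c.
Proof.
move=> /set0Pn [a0 a0A] hs.
case: (classic (exists2 a, a \in A & F a <= c)) => // hn.
have hall : forall a, a \in A -> c < F a.
  move=> a aA; case: (Rle_lt_dec (F a) c) => // h; by case: hn; exists a.
have h1 : F a0 - c <= \big[Rplus/0]_(a in A) (F a - c).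
  apply: (rsum_term (F:=fun a => F a - c) a0A) => a aA; have := hall a aA; lra.
rewrite /Rminus rsum_split rsum_opp rsum_const hs in h1.
have := hall a0 a0A; lra.
Qed.

Lemma exp_le_mono x y : x <= y -> exp x <= exp y.
Proof. case/Rle_lt_or_eq_dec => h; [apply: Rlt_le; exact: exp_increasing | by rewrite h; apply: Rle_refl]. Qed.

Lemma delta_bound' (c : bool) d0 u y r : 0 <= d0 -> 0 <= u <= r*d0 -> 0 <= y <= r -> 0 <= r ->
  -d0 <= (if c then d0 else 0) + u*y/r - (d0+u)*(y + (if c then 1 else 0))/(r+1) <= d0.
Proof.
move=> h1 h2 h3 h4; case: c.
  by have := delta_bound d0 u y r 1 h1 h2 h3 h4 (or_intror erefl); rewrite Rmult_1_l.
by have := delta_bound d0 u y r 0 h1 h2 h3 h4 (or_introl erefl); rewrite Rmult_0_l.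
Qed.

Section Pot.
Variable n : nat.
Variable d : 'I_n -> nat.
Variable X : 'I_n -> {set 'I_n}.
Variable lam : R.
Hypothesis lam0 : 0 <= lam.
Hypothesis lamd : forall s, lam * INR (d s) <= 1/4.

Definition Us (RS : {set 'I_n}) := \big[Rplus/0]_(s in RS) INR (d s).
Definition Qs (RS : {set 'I_n}) := \big[Rplus/0]_(s in RS) (INR (d s))^2.
Definition Ws (RS : {set 'I_n}) (f : 'I_n -> 'I_n) b :=
  \big[Rplus/0]_(s in RS) (if f s \in X b then INR (d s) else 0).
Definition Ms (RS RA : {set 'I_n}) b := Us RS * INR #|X b :&: RA| / INR #|RA|.
Definition Es RS RA f b := exp (lam * (Ws RS f b - Ms RS RA b) - lam^2 * Qs RS).

Lemma card_XD1 (RA : {set 'I_n}) a b : a \in RA ->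
  INR #|X b :&: RA| = INR #|X b :&: (RA :\ a)| + (if a \in X b then 1 else 0).
Proof.
move=> aA; rewrite (cardsD1 a (X b :&: RA)) inE aA andbT -setIDA plus_INR Rplus_comm.
by case: (a \in X b).
Qed.

Lemma card_XD1_le (RA : {set 'I_n}) a b :
  leq #|X b :&: (RA :\ a)| #|RA :\ a|.
Proof. by apply: subset_leq_card; apply: subsetIr. Qed.

Lemma sum_ind_X (RA : {set 'I_n}) b c :
  \big[Rplus/0]_(a in RA) (if a \in X b then c else 0) = c * INR #|X b :&: RA|.
Proof.
have -> : \big[Rplus/0]_(a in RA) (if a \in X b then c else 0) =
   \big[Rplus/0]_(a in RA) (c * INR (if a \in X b then 1%nat else 0%nat)).
  by apply: eq_bigr => a _; case: (a \in X b) => /=; ring.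
rewrite rsum_scale -INR_sum -big_mkcondr /= sum1_card; congr (_ * INR _).
by apply: eq_card => x; rewrite !inE andbC.
Qed.

Lemma pot r : forall (RS RA : {set 'I_n}) (p : 'I_n -> R),
  #|RS| = r -> #|RA| = r -> (forall b, 0 <= p b) ->
  exists f : 'I_n -> 'I_n, {in RS, forall s, f s \in RA} /\ {in RS &, injective f} /\
   \big[Rplus/0]_b (p b * Es RS RA f b) <= \big[Rplus/0]_b p b.
Proof.
elim: r => [|r IH] RS RA p hS hA hp.
  move/cards0_eq: hS => ->; move/cards0_eq: hA => ->.
  exists (fun s => s); split; first by move=> s; rewrite inE.
  split; first by move=> s; rewrite inE.
  apply: Req_le; apply: eq_bigr => b _.
  rewrite /Es /Ws /Ms /Us /Qs !big_set0 cards0 /=.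
  have -> : lam * (0 - 0 * INR #|X b :&: set0| / 0) - lam ^ 2 * 0 = 0 by rewrite /Rdiv; ring.
  by rewrite exp_0 Rmult_1_r.
have [s1 s1in] : exists s1, s1 \in RS.
  apply/set0Pn; apply/eqP => h; move: hS; by rewrite h cards0.
have [s0 s0in s0max] : exists2 s0, s0 \in RS & forall s, s \in RS -> (d s <= d s0)%nat.
  by case: (arg_maxnP d s1in) => s0 h1 h2; exists s0.
set d0 := INR (d s0).
set RS' := RS :\ s0.
have hS' : #|RS'| = r by move: hS; rewrite (cardsD1 s0 RS) s0in => [[]].
set u := Us RS'.
have hU : Us RS = d0 + u by rewrite /Us (big_setD1 s0 s0in).
have hd0 : 0 <= d0 := pos_INR _.
have hu : 0 <= u <= INR r * d0.
  split; first by apply: rsum_ge0 => s _; apply: pos_INR.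
  rewrite -hS' -rsum_const; apply: rsum_le => s; rewrite in_setD1 => /andP[_ sin].
  by apply: le_INR; apply/leP; exact: s0max.
have hRA0 : RA != set0 by apply/eqP => h; move: hA; rewrite h cards0.
set D := fun b a => (if a \in X b then d0 else 0) + Ms RS' (RA :\ a) b - Ms RS RA b.
have hA' : forall a, a \in RA -> #|RA :\ a| = r.
  by move=> a aA; move: hA; rewrite (cardsD1 a RA) aA => [[]].
have hD : forall b a, a \in RA -> -d0 <= D b a <= d0.
  move=> b a aA.
  have hy' := card_XD1_le RA a b.
  rewrite /D /Ms hU (hA' a aA) hA (card_XD1 RA a b aA) S_INR.
  apply: delta_bound' => //; last by apply: pos_INR.
  split; first by apply: pos_INR.
  by rewrite -(hA' a aA); apply: le_INR; apply/leP.
have hD0 : forall b, \big[Rplus/0]_(a in RA) D b a = 0.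
  move=> b; rewrite /D rsum_split /Rminus rsum_split rsum_opp rsum_const sum_ind_X.
  set y := INR #|X b :&: RA|.
  have -> : \big[Rplus/0]_(a in RA) Ms RS' (RA :\ a) b =
     \big[Rplus/0]_(a in RA) (u / INR r * (y + - (if a \in X b then 1 else 0))).
    apply: eq_bigr => a aA; rewrite /Ms (hA' a aA) /y (card_XD1 RA a b aA) /Rdiv -/u; ring.
  rewrite rsum_scale rsum_split rsum_opp rsum_const sum_ind_X -/y.
  rewrite /Ms hU hA S_INR -/y.
  case: (Req_dec (INR r) 0) => hr0.
    have hu0 : u = 0 by rewrite hr0 in hu; lra.
    rewrite hu0 hr0 /Rdiv Rplus_0_l Rinv_1; ring.
  field; repeat split; move: (pos_INR r); lra.
have [a aA ha] : exists2 a, a \in RA &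
    \big[Rplus/0]_b (p b * (1 + lam * D b a)) <= \big[Rplus/0]_b p b.
  apply: exists_le_avg => //.
  rewrite (exchange_big) /= -rsum_scale; apply: eq_bigr => b _.
  have -> : \big[Rplus/0]_(a in RA) (p b * (1 + lam * D b a)) =
            p b * \big[Rplus/0]_(a in RA) (1 + lam * D b a) by rewrite rsum_scale.
  by rewrite rsum_split rsum_const rsum_scale hD0 Rmult_0_r Rplus_0_r Rmult_1_r Rmult_comm.
set p' := fun b => p b * (1 + lam * D b a).
have hlD : forall b, -1/4 <= lam * D b a <= 1/4.
  move=> b; have := hD b a aA; have := lamd s0; rewrite -/d0 => h1 h2; split; nra.
have hp' : forall b, 0 <= p' b.
  by move=> b; rewrite /p'; apply: Rmult_le_pos => //; have := hlD b; lra.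
have [f' [f'in [f'inj f'pot]]] := IH RS' (RA :\ a) p' hS' (hA' a aA) hp'.
exists (fun s => if s == s0 then a else f' s).
split.
  move=> s sin /=; case: ifP => [_|/negbT ne]; first done.
  have : f' s \in RA :\ a by apply: f'in; rewrite in_setD1 ne.
  by rewrite in_setD1 => /andP[].
split.
  move=> x1 x2 h1 h2 /=; case: ifP => e1; case: ifP => e2.
  - by rewrite (eqP e1) (eqP e2).
  - move=> ha'; have : f' x2 \in RA :\ a by apply: f'in; rewrite in_setD1 e2.
    by rewrite -ha' in_setD1 eqxx.
  - move=> ha'; have : f' x1 \in RA :\ a by apply: f'in; rewrite in_setD1 e1.
    by rewrite ha' in_setD1 eqxx.
  - by apply: f'inj; rewrite in_setD1 ?e1 ?e2.
apply: Rle_trans ha; apply: Rle_trans f'pot.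
apply: rsum_le => b _.
have hW : Ws RS (fun s => if s == s0 then a else f' s) b =
   (if a \in X b then d0 else 0) + Ws RS' f' b.
  rewrite /Ws (big_setD1 s0 s0in) /= eqxx; congr (_ + _).
  by apply: eq_bigr => s; rewrite in_setD1 => /andP[ne _]; rewrite (negbTE ne).
have hQ : Qs RS = d0^2 + Qs RS' by rewrite /Qs (big_setD1 s0 s0in).
have hE : Es RS RA (fun s => if s == s0 then a else f' s) b =
   Es RS' (RA :\ a) f' b * exp (lam * D b a - lam^2 * d0^2).
  by rewrite /Es hW hQ -exp_plus; f_equal; rewrite /D; ring.
rewrite hE /p'.
have hk : exp (lam * D b a - lam^2 * d0^2) <= 1 + lam * D b a.
  apply: (Rle_trans _ _ _ _ (exp_key _ (hlD b))).
  apply: exp_le_mono; have := hD b a aA; move=> h.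
  have h2 : 0 <= (d0 - D b a) * (d0 + D b a) by apply: Rmult_le_pos; lra.
  have h3 : 0 <= lam^2 by nra.
  nra.
have hE0 : 0 <= Es RS' (RA :\ a) f' b by apply: Rlt_le; apply: exp_pos.
set E' := Es RS' (RA :\ a) f' b; set ex := exp _.
have h1 : E' * ex <= E' * (1 + lam * D b a) by apply: Rmult_le_compat_l.
have h2 := Rmult_le_compat_l _ _ _ (hp b) h1.
by apply: (Rle_trans _ _ _ h2); apply: Req_le; ring.
Qed.

End Pot.

Close Scope R_scope.
Set Implicit Arguments. Unset Strict Implicit.

Section Hall.
Variable n : nat.
Variable R : 'I_n -> 'I_n -> bool.

Definition Nb (Ts Z : {set 'I_n}) := [set t in Ts | [exists b in Z, R b t]].

Lemma Nb_sub Ts Z : Nb Ts Z \subset Ts.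
Proof. by apply/subsetP => t; rewrite inE => /andP[]. Qed.

Lemma hall k : forall Bs Ts : {set 'I_n}, #|Bs| <= k ->
  (forall Z : {set 'I_n}, Z \subset Bs -> #|Z| <= #|Nb Ts Z|) ->
  exists g : 'I_n -> 'I_n, {in Bs, forall b, g b \in Ts /\ R b (g b)} /\ {in Bs &, injective g}.
Proof.
elim: k => [|k IH] Bs Ts hk hH.
  move: hk; rewrite leqn0 cards_eq0 => /eqP ->.
  by exists (fun x => x); split => x; rewrite inE.
case: (boolP [exists Z : {set 'I_n}, [&& Z \subset Bs, Z != set0, Z != Bs & #|Nb Ts Z| <= #|Z|]]).
- case/existsP => Z0 /and4P [sZ nZ0 nZB hZ].
  have hZeq : #|Nb Ts Z0| = #|Z0| by apply/eqP; rewrite eqn_leq hZ hH.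
  have pZ : Z0 \proper Bs by rewrite properEneq nZB sZ.
  have [g1 [g1in g1inj]] : exists g : 'I_n -> 'I_n, {in Z0, forall b, g b \in Ts /\ R b (g b)} /\ {in Z0 &, injective g}.
    apply: (IH Z0 Ts).
      by rewrite -ltnS; apply: leq_trans hk; apply: proper_card.
    by move=> Z sZZ; apply: hH; apply: subset_trans sZ.
  set Bs2 := Bs :\: Z0; set Ts2 := Ts :\: Nb Ts Z0.
  have [g2 [g2in g2inj]] : exists g : 'I_n -> 'I_n, {in Bs2, forall b, g b \in Ts2 /\ R b (g b)} /\ {in Bs2 &, injective g}.
    apply: (IH Bs2 Ts2).
      rewrite -ltnS; apply: leq_trans hk.
      rewrite /Bs2 (cardsD Bs Z0) (setIidPr sZ).
      have : 0 < #|Z0| by rewrite card_gt0.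
      have : #|Z0| <= #|Bs| by apply: subset_leq_card.
      lia.
    move=> Y sY.
    have dYZ : Y :&: Z0 = set0.
      apply/setP=> x; rewrite !inE; apply/negbTE; apply/andP => [[xY xZ]].
      by move/subsetP: sY => /(_ x xY); rewrite !inE xZ.
    have h1 : #|Y :|: Z0| <= #|Nb Ts (Y :|: Z0)|.
      apply: hH; rewrite subUset sZ andbT; apply: subset_trans sY _; exact: subsetDl.
    have h2 : #|Y :|: Z0| = #|Y| + #|Z0| by rewrite cardsU dYZ cards0 subn0.
    have h3 : Nb Ts (Y :|: Z0) \subset Nb Ts2 Y :|: Nb Ts Z0.
      apply/subsetP => t; rewrite !inE => /andP[tT /existsP [b /andP[]]].
      rewrite inE => /orP [bY | bZ] Rbt.
        case tN: [exists b0 in Z0, R b0 t]; rewrite tT /=; first by rewrite ?orbT.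
        by rewrite ?orbF; apply/existsP; exists b; rewrite bY Rbt.
      by rewrite tT /=; apply/orP; right; apply/existsP; exists b; rewrite bZ Rbt.
    have h4 := subset_leq_card h3.
    have [h5 _] := leq_card_setU (Nb Ts2 Y) (Nb Ts Z0).
    lia.
  exists (fun b => if b \in Z0 then g1 b else g2 b); split.
    move=> b bB; case: ifP => bZ; first exact: g1in.
    have bB2 : b \in Bs2 by rewrite inE bZ bB.
    have [h1 h2] := g2in b bB2; split => //.
    by move: h1; rewrite inE => /andP[].
  have key : forall b1 b2, b1 \in Z0 -> b2 \in Bs2 -> g1 b1 != g2 b2.
    move=> b1 b2 h1 h2; apply/eqP => he.
    have [i1 r1] := g1in b1 h1; have [i2 _] := g2in b2 h2.
    move: i2; rewrite inE -he => /andP[/negP []]; rewrite inE i1 /=.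
    by apply/existsP; exists b1; rewrite h1 r1.
  move=> b1 b2 h1 h2 /=; case: ifP => e1; case: ifP => e2.
  - by apply: g1inj.
  - by move=> he; have := key b1 b2 e1; rewrite inE e2 h2 he eqxx => /(_ erefl).
  - by move=> he; have := key b2 b1 e2; rewrite inE e1 h1 he eqxx => /(_ erefl).
  - by apply: g2inj; rewrite inE ?e1 ?e2 ?h1 ?h2.
- move=> hno.
  case: (set_0Vmem Bs) => [-> | [b0 b0B]].
    by exists (fun x => x); split => x; rewrite inE.
  have : 1 <= #|Nb Ts [set b0]|.
    by rewrite -(cards1 b0); apply: hH; rewrite sub1set.
  rewrite card_gt0 => /set0Pn [t0]; rewrite inE => /andP [t0T /existsP [b /andP[]]].
  rewrite inE => /eqP -> Rt0.
  set Bs' := Bs :\ b0; set Ts' := Ts :\ t0.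
  have [g' [g'in g'inj]] : exists g : 'I_n -> 'I_n, {in Bs', forall b, g b \in Ts' /\ R b (g b)} /\ {in Bs' &, injective g}.
    apply: (IH Bs' Ts').
      by move: hk; rewrite (cardsD1 b0 Bs) b0B.
    move=> Z sZ.
    case: (set_0Vmem Z) => [-> | [z zZ]]; first by rewrite cards0.
    have sZB : Z \subset Bs by apply: subset_trans sZ (subsetDl _ _).
    have nZ0 : Z != set0 by apply/set0Pn; exists z.
    have nZB : Z != Bs.
      apply/eqP => he; move/subsetP: sZ => /(_ b0); rewrite he b0B !inE eqxx. by move=> /(_ erefl).
    have hlt : #|Z| < #|Nb Ts Z|.
      rewrite ltnNge; apply/negP => hle; move/negP: hno; apply; apply/existsP; exists Z.
      by rewrite sZB nZ0 nZB hle.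
    have hsub : Nb Ts Z :\ t0 \subset Nb Ts' Z.
      apply/subsetP => t; rewrite !inE => /andP[nt /andP[tT ex]]; by rewrite nt tT ex.
    have := subset_leq_card hsub.
    have := cardsD1 t0 (Nb Ts Z).
    lia.
  exists (fun b => if b == b0 then t0 else g' b); split.
    move=> x bB; case: ifP => [/eqP -> | ne]; first by split.
    have bB' : x \in Bs' by rewrite !inE ne bB.
    have [h1 h2] := g'in x bB'; split => //.
    by move: h1; rewrite inE => /andP[].
  move=> b1 b2 h1 h2 /=; case: ifP => e1; case: ifP => e2.
  - by rewrite (eqP e1) (eqP e2).
  - move=> he; have : g' b2 \in Ts' by apply: (proj1 (g'in b2 _)); rewrite !inE e2 h2.
    by rewrite -he !inE eqxx.
  - move=> he; have : g' b1 \in Ts' by apply: (proj1 (g'in b1 _)); rewrite !inE e1 h1.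
    by rewrite he !inE eqxx.
  - by apply: g'inj; rewrite !inE ?e1 ?e2 ?h1 ?h2.
Qed.

End Hall.

Lemma card_sum (T : finType) (A : {set T}) : #|A| = \sum_t (if t \in A then 1 else 0).
Proof. by rewrite -sum1_card big_mkcond. Qed.

Section Own.
Variable n : nat.
Variable H : bigraph n.
Hypothesis hHR : forall t, degR H t = 1.

Definition own (t : 'I_n) : 'I_n := odflt t [pick s | H s t].

Lemma own_spec s t : H s t = (s == own t).
Proof.
have /cards1P [x hx] : #|[set x | H x t]| == 1 by rewrite -/(degR H t) hHR.
have hxs : forall y, H y t = (y == x) by move=> y; move/setP: hx => /(_ y); rewrite !inE.
rewrite /own; case: pickP => [y hy | hn] /=.
  by rewrite hxs; move: hy; rewrite hxs => /eqP ->.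
by move: (hn x); rewrite hxs eqxx.
Qed.

Lemma count_own (P : pred 'I_n) :
  #|[set t | P (own t)]| = \sum_s (if P s then degL H s else 0).
Proof.
have -> : \sum_s (if P s then degL H s else 0) =
   \sum_s \sum_t (if P s && H s t then 1 else 0).
  apply: eq_bigr => s _; rewrite /degL card_sum; case: (P s) => /=.
    by apply: eq_bigr => t _; rewrite inE.
  by rewrite big1.
rewrite exchange_big card_sum; apply: eq_bigr => t _.
rewrite (bigD1 (own t)) //=.
have hown : H (own t) t by rewrite own_spec.
rewrite big1 ?addn0; first by rewrite inE hown andbT.
by move=> s ne; rewrite own_spec (negbTE ne) andbF.
Qed.

Lemma sum_deg : \sum_s degL H s = n.
Proof.
have := count_own predT; rewrite /= => <-.
have -> : [set t : 'I_n | true] = setT by apply/setP => x; rewrite !inE.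
by rewrite cardsT card_ord.
Qed.

Lemma split_sum (Q : pred 'I_n) :
  \sum_s (if Q s then degL H s else 0) + \sum_s (if ~~ Q s then degL H s else 0) = n.
Proof.
apply: (etrans _ sum_deg); rewrite -big_split /=; apply: eq_bigr => s _; case: (Q s); by rewrite /= ?addn0.
Qed.

End Own.

Unset Implicit Arguments.
Open Scope R_scope.

Theorem theorem7 :
  forall eps : R, 0 < eps < 1/2 ->
  exists n0 : nat, forall n : nat, (n > n0)%nat ->
  forall G H : bigraph n,
    (forall a, INR (degL G a) > (1/2 + eps) * INR n) ->
    (forall b, INR (degR G b) > (1/2 + eps) * INR n) ->
    (forall s, INR (degL H s) < eps ^ 4 / 100 * (INR n / ln (INR n))) ->
    (forall t, degR H t = 1%nat) ->
    bip_embeds H G.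
Proof.
move=> eps heps; exists 1%nat => n hn G H hGL hGR hHL hHR.
have hn2 : (2 <= n)%nat by [].
have hnR : 2 <= INR n by have := le_INR 2 n (ssrnat.leP hn2); rewrite /=; lra.
have hln : 0 < ln (INR n).
  rewrite -ln_1; apply: ln_increasing; lra.
set d := fun s => degL H s.
have hsum : (\sum_s d s)%nat = n := sum_deg hHR.
have hcard : (0 < #|'I_n|)%nat by rewrite card_ord; apply: leq_trans hn2.
case: (eq_bigmax d hcard) => s1 hs1.
set d1 := (\max_s d s)%nat.
have hd1 : forall s, (d s <= d1)%nat by move=> s; apply: leq_bigmax.
have hd1pos : (0 < d1)%nat.
  rewrite lt0n; apply/negP => /eqP h0.
  move: hsum; rewrite big1 => [h|s _]; first by move: hn2; rewrite -h.
  by apply/eqP; rewrite -leqn0 -h0 hd1.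
have hd1R : 1 <= INR d1 by have := le_INR 1 d1 (ssrnat.leP hd1pos); rewrite /=.
have hd1ln : INR d1 * ln (INR n) < eps ^ 4 / 100 * INR n.
  have := hHL s1; rewrite -/(d s1) -hs1 -/d1 => h.
  have : INR d1 * ln (INR n) < eps ^ 4 / 100 * (INR n / ln (INR n)) * ln (INR n).
    by apply: Rmult_lt_compat_r.
  have -> : eps ^ 4 / 100 * (INR n / ln (INR n)) * ln (INR n) = eps ^ 4 / 100 * INR n.
    by field; lra.
  done.
set lam := eps / (2 * INR d1).
have hlam : 0 < lam by apply: Rdiv_lt_0_compat; lra.
have hlamd1 : lam * INR d1 = eps / 2 by rewrite /lam; field; lra.
have hlamd : forall s, lam * INR (d s) <= 1/4.
  move=> s; have := le_INR _ _ (ssrnat.leP (hd1 s)) => h.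
  have : lam * INR (d s) <= lam * INR d1 by apply: Rmult_le_compat_l; lra.
  lra.
set X := fun b : 'I_n => [set a | ~~ G a b].
have hT : #|[set: 'I_n]| = n by rewrite cardsT card_ord.
have [phi [_ [phiinj hpot]]] := @pot n d X lam (Rlt_le _ _ hlam) hlamd n setT setT
   (fun _ => 1) hT hT (fun _ => Rle_0_1).
have hnpos : 0 < INR n by lra.
have hn' : INR n = INR (\sum_s d s)%nat by rewrite hsum.
have hQ : Qs n d setT <= INR d1 * INR n.
  rewrite /Qs hn' INR_sum -rsum_scale.
  have -> : \big[Rplus/0]_(i < n) (INR d1 * INR (d i)) = \big[Rplus/0]_(i in [set: 'I_n]) (INR d1 * INR (d i)).
    by apply: eq_bigl => i; rewrite inE.
  apply: rsum_le => s _; rewrite /pow Rmult_1_r; apply: Rmult_le_compat_r; first exact: pos_INR.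
  exact: le_INR (ssrnat.leP (hd1 s)).
have hU : Us n d setT = INR n.
  rewrite /Us hn' INR_sum; by apply: eq_bigl => i; rewrite inE.
have hLK : ln (INR n) < lam * (eps^3 * INR n / 50).
  have -> : lam * (eps^3 * INR n / 50) = eps ^ 4 / 100 * INR n / INR d1 by rewrite /lam; field; lra.
  apply: (Rmult_lt_reg_l (INR d1)); first lra.
  have -> : INR d1 * (eps ^ 4 / 100 * INR n / INR d1) = eps ^ 4 / 100 * INR n by field; lra.
  exact: hd1ln.
have hW : forall b, INR (\sum_s (if ~~ G (phi s) b then d s else 0))%nat < INR n / 2.
  move=> b.
  have hE : Es n d X lam setT setT phi b <= INR n.
    apply: Rle_trans (Rle_trans _ _ _ _ hpot) _; last first.
      by rewrite rsum_const card_ord Rmult_1_r; apply: Rle_refl.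
    rewrite -[Es _ _ _ _ _ _ _ _]Rmult_1_l.
    by apply: (rsum_term (F := fun b => 1 * Es n d X lam setT setT phi b)) => // i _; rewrite Rmult_1_l; apply: Rlt_le; apply: exp_pos.
  rewrite /Es in hE.
  set z := lam * _ - _ in hE.
  have hz : z <= ln (INR n).
    case: (Rle_lt_dec z (ln (INR n))) => // hgt.
    have := exp_increasing _ _ hgt; rewrite exp_ln //; lra.
  have hWs : Ws n d X setT phi b = INR (\sum_s (if ~~ G (phi s) b then d s else 0))%nat.
    rewrite /Ws INR_sum; apply: eq_big => s; first by rewrite inE.
    by move=> _; rewrite /X inE; case: (G (phi s) b).
  have hMs : Ms n d X setT setT b = INR #|X b|.
    rewrite /Ms hU setIT cardsT card_ord; rewrite /Rdiv Rmult_comm -Rmult_assoc Rinv_l ?Rmult_1_l //; lra.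
  have hy : INR #|X b| < (1/2 - eps) * INR n.
    have hc := cardsC [set x | G x b].
    have hXb : X b = ~: [set x | G x b] by apply/setP => x; rewrite !inE.
    rewrite card_ord -hXb in hc.
    have := hGR b; rewrite /degR => h.
    have : INR #|[set x | G x b]| + INR #|X b| = INR n by rewrite -plus_INR; congr INR.
    lra.
  rewrite /z hWs hMs in hz.
  set W := INR _ in hz *.
  set Q := Qs n d setT in hQ hz.
  have hQ2 : lam^2 * Q <= lam * (eps / 2 * INR n).
    rewrite -hlamd1.
    have : lam^2 * Q <= lam^2 * (INR d1 * INR n) by apply: Rmult_le_compat_l; nra.
    have -> : lam ^ 2 * (INR d1 * INR n) = lam * (lam * INR d1 * INR n) by ring.
    by [].
  have : lam * (W - INR #|X b|) < lam * (eps ^ 3 * INR n / 50 + eps / 2 * INR n).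
    rewrite Rmult_plus_distr_l; lra.
  move/(Rmult_lt_reg_l _ _ _ hlam) => h.
  have : eps ^ 3 * INR n / 50 <= eps / 2 * INR n.
    have : eps ^ 3 <= eps by nra.
    nra.
  lra.
pose Rel := fun b t => G (phi (own H t)) b.
have hcnt : forall Z : {set 'I_n}, #|Nb Rel setT Z| =
    (\sum_s (if [exists b in Z, G (phi s) b] then d s else 0))%nat.
  move=> Z; rewrite -(count_own hHR (fun s => [exists b in Z, G (phi s) b])).
  by apply: eq_card => t; rewrite !inE.
have hHall : forall Z : {set 'I_n}, Z \subset setT -> (#|Z| <= #|Nb Rel setT Z|)%nat.
  move=> Z _; rewrite hcnt.
  case: (set_0Vmem Z) => [-> | [b bZ]]; first by rewrite cards0.
  case: (boolP [forall s, [exists b in Z, G (phi s) b]]) => hall.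
    have -> : (\sum_s (if [exists b0 in Z, G (phi s) b0] then d s else 0))%nat = (\sum_s d s)%nat.
      by apply: eq_bigr => s _; move/forallP: hall => /(_ s) ->.
    by rewrite hsum; apply: leq_trans (max_card _) _; rewrite card_ord.
  move/forallPn: hall => [s0 /existsPn hs0].
  set a := phi s0.
  have hZsub : Z \subset [set y | ~~ G a y].
    apply/subsetP => x xZ; rewrite inE; have := hs0 x; by rewrite xZ.
  have hc := cardsC [set y | G a y].
  have hXa : [set y | ~~ G a y] = ~: [set y | G a y] by apply/setP => x; rewrite !inE.
  rewrite card_ord -hXa in hc.
  have hZle := subset_leq_card hZsub.
  have hZR : INR #|Z| < (1/2 - eps) * INR n.
    have := hGL a; rewrite /degL => h.
    have : INR #|[set y | G a y]| + INR #|[set y | ~~ G a y]| = INR n by rewrite -plus_INR; congr INR.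
    have := le_INR _ _ (ssrnat.leP hZle).
    move=> h1 h2; set k := INR #|[set y | ~~ G a y]| in h1 h2; set k2 := INR #|[set y | G a y]| in h h2. lra.
  have hsplit := split_sum hHR (fun s => G (phi s) b).
  have hge : (\sum_s (if G (phi s) b then d s else 0) <=
       \sum_s (if [exists b0 in Z, G (phi s) b0] then d s else 0))%nat.
    apply: leq_sum => s _; case hG: (G (phi s) b) => //.
    by have -> : [exists b0 in Z, G (phi s) b0] by apply/existsP; exists b; rewrite bZ hG.
  have hWb := hW b.
  have hsR : INR (\sum_s (if G (phi s) b then d s else 0))%nat +
             INR (\sum_s (if ~~ G (phi s) b then d s else 0))%nat = INR n.
    by rewrite -plus_INR; congr INR.
  have := le_INR _ _ (ssrnat.leP hge) => hge'.
  apply/ssrnat.leP; apply: Nat.lt_le_incl; apply: INR_lt.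
  set A1 := INR (\sum_s (if G (phi s) b then d s else 0))%nat in hsR hge' *.
  set A2 := INR (\sum_s (if ~~ G (phi s) b then d s else 0))%nat in hsR hWb *.
  set A3 := INR (\sum_s (if [exists b0 in Z, G (phi s) b0] then d s else 0))%nat in hge' *.
  have := Rmult_lt_0_compat _ _ (proj1 heps) hnpos; lra.
have hTn : (#|[set: 'I_n]| <= n)%nat by rewrite cardsT card_ord.
have [g [gin ginj]] := @hall n Rel n setT setT hTn hHall.
have ginj' : injective g by move=> x y; apply: ginj; rewrite inE.
have phiinj' : injective phi by move=> x y; apply: phiinj; rewrite inE.
case: (injF_bij ginj') => g' hgg' hg'g.
exists phi, g'; split; first exact: injF_bij phiinj'.
split; first by exists g.
move=> s t hst.
have [_ hR] := gin (g' t) (in_setT _).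
rewrite /Rel hg'g in hR.
by move: hst; rewrite (own_spec hHR) => /eqP ->.
Qed.
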